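(* Let $a>1$, $d\ge 4$, and let $G$ be generated by the security model $\mathcal{S}(n,a,d)$. Let $\delta_1=\frac{10}{\log^{a-1}n}$ and $T_2=(1-\delta_1)n$. Then with probability $1-o(1)$ both of the following hold: (1) every homochromatic set whose seed node was created at a time step $\le T_2$ has size at least $\log n$; (2) every homochromatic set whose seed node was created at a time step $>T_2$ has size at most $30\log n$.
   Context: Security model $\mathcal{S}(n,a,d)$ (homophyly exponent $a$, natural number $d$): start with an initial graph $G_2$ on two nodes, each of which is a seed node with its own distinct color. For $i=3,\dots,n$, given $G_{i-1}$, let $p_i=(\log i)^{-a}$ and create a new node $v$ (at time step $i$). With probability $p_i$, $v$ receives a brand-new color $c$ and is called the seed node of $c$; then one edge $(v,u)$ is added with $u$ chosen with probability proportional to degrees in $G_{i-1}$, and $d-1$ edges $(v,u_j)$ are added, each $u_j$ chosen uniformly at random among all seed nodes of $G_{i-1}$. Otherwise, $v$ picks a color $c$ uniformly at random among all colors present in $G_{i-1}$, takes color $c$, and $d$ edges $(v,u_j)$ are added, each $u_j$ chosen with probability proportional to degree among the nodes of color $c$ in $G_{i-1}$. The network is $G=G_n$. A homochromatic set is the set of all nodes of $G$ of one color; it is created at the time step its seed node is created. *)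

(* Defs.v *)
From Stdlib Require Import Reals List Arith Bool.
Import ListNotations.
Open Scope R_scope.

Definition dist (A : Type) := list (R * A).

Definition dret {A} (x : A) : dist A := [(1, x)].

Definition dbind {A B} (m : dist A) (f : A -> dist B) : dist B :=
  flat_map (fun px => map (fun qy => (fst px * fst qy, snd qy)) (f (snd px))) m.

Definition dbern (p : R) : dist bool := [(p, true); (1 - p, false)].

Definition dweighted {A} (l : list (R * A)) : dist A :=
  let tot := fold_right Rplus 0 (map fst l) in
  map (fun wx => (fst wx / tot, snd wx)) l.

Definition duniform {A} (l : list A) : dist A := dweighted (map (fun x => (1, x)) l).

Fixpoint diid {A} (k : nat) (m : dist A) : dist (list A) :=
  match k with
  | O => dret []
  | S k' => dbind m (fun x => dbind (diid k' m) (fun xs => dret (x :: xs)))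
  end.

Definition prob {A} (m : dist A) (P : A -> bool) : R :=
  fold_right Rplus 0 (map (fun px => if P (snd px) then fst px else 0) m).

(** Node j (0-based) is the node created at time step j+1.  Colors present in
    a graph are 0,...,ncol-1 (every color has exactly one seed node). *)
Record state := mkState {
  col : list nat;
  isseed : list bool;
  edges : list (nat * nat);
  ncol : nat
}.

Definition nodes (s : state) : list nat := seq 0 (length (col s)).

Definition deg (s : state) (u : nat) : nat :=
  length (filter (fun e => orb (Nat.eqb (fst e) u) (Nat.eqb (snd e) u)) (edges s)).

Definition seeds (s : state) : list nat :=
  filter (fun u => nth u (isseed s) false) (nodes s).

Definition of_color (s : state) (c : nat) : list nat :=
  filter (fun u => Nat.eqb (nth u (col s) O) c) (nodes s).

Definition degpick (s : state) (l : list nat) : dist nat :=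
  dweighted (map (fun u => (INR (deg s u), u)) l).

Definition p_new (a : R) (i : nat) : R := Rpower (ln (INR i)) (- a).

(** the step at time i: from G_{i-1} to G_i *)
Definition step (a : R) (d : nat) (i : nat) (s : state) : dist state :=
  let v := length (col s) in
  dbind (dbern (p_new a i)) (fun b =>
    if b then
      dbind (degpick s (nodes s)) (fun u =>
      dbind (diid (d - 1) (duniform (seeds s))) (fun us =>
      dret (mkState (col s ++ [ncol s]) (isseed s ++ [true])
                    (edges s ++ map (fun w => (v, w)) (u :: us)) (S (ncol s)))))
    else
      dbind (duniform (seq 0 (ncol s))) (fun c =>
      dbind (diid d (degpick s (of_color s c))) (fun us =>
      dret (mkState (col s ++ [c]) (isseed s ++ [false])
                    (edges s ++ map (fun w => (v, w)) us) (ncol s))))).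

Definition G2 : state := mkState [0%nat; 1%nat] [true; true] [(0%nat, 1%nat)] 2.

(** gen k = distribution of G_{k+2} *)
Fixpoint gen (a : R) (d : nat) (k : nat) : dist state :=
  match k with
  | O => dret G2
  | S k' => dbind (gen a d k') (step a d (k' + 3))
  end.

Definition SModel (n : nat) (a : R) (d : nat) : dist state := gen a d (n - 2).

Definition seed_time (s : state) (c : nat) : nat :=
  match filter (fun u => andb (nth u (isseed s) false) (Nat.eqb (nth u (col s) O) c)) (nodes s) with
  | u :: _ => S u
  | [] => O
  end.

Definition hsize (s : state) (c : nat) : nat := length (of_color s c).

Definition delta1 (a : R) (n : nat) : R := 10 / Rpower (ln (INR n)) (a - 1).
Definition T2 (a : R) (n : nat) : R := (1 - delta1 a n) * INR n.

Definition Rleb (x y : R) : bool := if Rle_dec x y then true else false.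

Definition good (a : R) (n : nat) (s : state) : bool :=
  forallb (fun c =>
    if Rleb (INR (seed_time s c)) (T2 a n)
    then Rleb (ln (INR n)) (INR (hsize s c))
    else Rleb (INR (hsize s c)) (30 * ln (INR n)))
  (seq 0 (ncol s)).

(* Main.v *)
Require Import Defs.
From Stdlib Require Import Reals List Arith.
Open Scope R_scope.
From Stdlib Require Import Reals List Arith Lia Lra Bool ZArith.
Require Import Defs.
Import ListNotations.
Open Scope R_scope.


Definition E {A} (m : dist A) (f : A -> R) : R :=
  fold_right Rplus 0 (map (fun px => fst px * f (snd px)) m).

Definition mass {A} (m : dist A) : R := E m (fun _ => 1).

Definition nonneg {A} (m : dist A) : Prop := Forall (fun px => 0 <= fst px) m.

Lemma E_nil {A} (f : A -> R) : E [] f = 0.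
Proof. reflexivity. Qed.

Lemma E_cons {A} (w : R) (x : A) m f : E ((w, x) :: m) f = w * f x + E m f.
Proof. reflexivity. Qed.

Lemma E_app {A} (l1 l2 : dist A) f : E (l1 ++ l2) f = E l1 f + E l2 f.
Proof.
  unfold E. induction l1 as [|[w x] l IH]; simpl; [lra|].
  rewrite IH. lra.
Qed.

Lemma E_scale_map {A B} (w : R) (l : dist A) (h : A -> B) (f : B -> R) :
  E (map (fun qy => (w * fst qy, h (snd qy))) l) f = w * E l (fun y => f (h y)).
Proof.
  induction l as [|[q y] l IH]; unfold E in *; simpl; [lra|].
  rewrite IH. lra.
Qed.

Lemma E_dbind {A B} (m : dist A) (g : A -> dist B) f :
  E (dbind m g) f = E m (fun x => E (g x) f).
Proof.
  induction m as [|[w x] m IH]; [reflexivity|].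
  unfold dbind in *; simpl. rewrite E_app.
  rewrite (E_scale_map w (g x) (fun y => y) f). rewrite IH. reflexivity.
Qed.

Lemma E_dret {A} (x : A) f : E (dret x) f = f x.
Proof. unfold E, dret; simpl; lra. Qed.

Lemma E_ext {A} (m : dist A) f g : (forall x, In x (map snd m) -> f x = g x) -> E m f = E m g.
Proof.
  induction m as [|[w x] m IH]; intros H; [reflexivity|].
  unfold E in *; simpl in *. rewrite (H x (or_introl eq_refl)).
  rewrite IH; auto.
Qed.

Lemma E_le {A} (m : dist A) f g : nonneg m ->
  (forall x, In x (map snd m) -> f x <= g x) -> E m f <= E m g.
Proof.
  induction m as [|[w x] m IH]; intros Hn H; [unfold E; simpl; lra|].
  inversion Hn; subst. unfold E in *; simpl in *.
  assert (w * f x <= w * g x) by (apply Rmult_le_compat_l; auto).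
  assert (fold_right Rplus 0 (map (fun px => fst px * f (snd px)) m) <=
          fold_right Rplus 0 (map (fun px => fst px * g (snd px)) m)) by (apply IH; auto).
  lra.
Qed.

Lemma E_plus {A} (m : dist A) f g : E m (fun x => f x + g x) = E m f + E m g.
Proof. induction m as [|[w x] m IH]; unfold E in *; simpl; [lra|]. rewrite IH; lra. Qed.

Lemma E_scal {A} (m : dist A) c f : E m (fun x => c * f x) = c * E m f.
Proof. induction m as [|[w x] m IH]; unfold E in *; simpl; [lra|]. rewrite IH; lra. Qed.

Lemma E_const {A} (m : dist A) c : E m (fun _ => c) = c * mass m.
Proof. unfold mass. rewrite <- E_scal. apply E_ext; intros; lra. Qed.

Lemma E_nonneg {A} (m : dist A) f : nonneg m -> (forall x, In x (map snd m) -> 0 <= f x) -> 0 <= E m f.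
Proof.
  intros Hn H. replace 0 with (E m (fun _ => 0)).
  apply E_le; auto. rewrite E_const; lra.
Qed.

Lemma prob_E {A} (m : dist A) P : prob m P = E m (fun x => if P x then 1 else 0).
Proof.
  induction m as [|[w x] m IH]; [reflexivity|].
  unfold prob, E in *; simpl in *. rewrite IH. destruct (P x); lra.
Qed.

Lemma in_dbind {A B} (m : dist A) (g : A -> dist B) y :
  In y (map snd (dbind m g)) -> exists x, In x (map snd m) /\ In y (map snd (g x)).
Proof.
  induction m as [|[w x] m IH]; simpl; [tauto|].
  unfold dbind; simpl. rewrite map_app, in_app_iff. intros [H|H].
  - exists x. split; auto. rewrite map_map in H; simpl in H.
    clear IH. induction (g x) as [|[q z] l IHl]; simpl in *; [tauto|]. destruct H; auto.
  - destruct (IH H) as [x' [? ?]]. exists x'; auto.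
Qed.

Lemma nonneg_app {A} (l1 l2 : dist A) : nonneg l1 -> nonneg l2 -> nonneg (l1 ++ l2).
Proof. unfold nonneg; intros; apply Forall_app; auto. Qed.

Lemma nonneg_dbind {A B} (m : dist A) (g : A -> dist B) :
  nonneg m -> (forall x, In x (map snd m) -> nonneg (g x)) -> nonneg (dbind m g).
Proof.
  induction m as [|[w x] m IH]; intros Hn H; [constructor|].
  inversion Hn; subst. unfold dbind; simpl. apply nonneg_app.
  - assert (Hg := H x (or_introl eq_refl)). clear -Hg H2.
    unfold nonneg in *. induction (g x) as [|[q z] l IHl]; simpl; [constructor|].
    inversion Hg; subst; simpl in *. constructor; simpl.
    + apply Rmult_le_pos; auto.
    + apply IHl; auto.
  - apply IH; auto. intros; apply H; simpl; auto.
Qed.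

Lemma nonneg_dret {A} (x : A) : nonneg (dret x).
Proof. repeat constructor; simpl; lra. Qed.

Lemma in_dret {A} (x y : A) : In y (map snd (dret x)) -> y = x.
Proof. simpl; intuition. Qed.

Lemma E_dbern p f : E (dbern p) f = p * f true + (1 - p) * f false.
Proof. unfold E, dbern; simpl; lra. Qed.

Lemma nonneg_dbern p : 0 <= p <= 1 -> nonneg (dbern p).
Proof. intros; constructor; [simpl; lra|]; constructor; [simpl; lra|constructor]. Qed.

Lemma E_dweighted {A} (l : list (R * A)) f :
  E (dweighted l) f = E l f / mass l.
Proof.
  unfold dweighted, mass.
  assert (Ht : fold_right Rplus 0 (map fst l) = E l (fun _ => 1)).
  { clear. induction l as [|[w x] l IH]; unfold E in *; simpl; [lra|]. rewrite IH; lra. }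
  rewrite Ht. generalize (E l (fun _ => 1)). intros t. clear Ht.
  induction l as [|[w x] l IH]; unfold E in *; simpl in *; [unfold Rdiv; lra|].
  rewrite IH. unfold Rdiv; lra.
Qed.

Lemma mass_dweighted {A} (l : list (R * A)) : mass l <> 0 -> mass (dweighted l) = 1.
Proof. intros H. unfold mass at 1. rewrite E_dweighted. fold (mass l). field; auto. Qed.

Lemma nonneg_dweighted {A} (l : list (R * A)) : nonneg l -> nonneg (dweighted l).
Proof.
  intros H. unfold dweighted.
  assert (Ht : 0 <= fold_right Rplus 0 (map fst l)).
  { clear -H. induction l as [|[w x] l IH]; simpl; [lra|]. inversion H; subst; simpl in *.
    specialize (IH H3). lra. }
  revert Ht. generalize (fold_right Rplus 0 (map fst l)). intros t Ht. pose proof I as Ht'.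
  clear Ht'. unfold nonneg in *.
  induction l as [|[w x] l IH]; simpl; [constructor|]. inversion H; subst; simpl in *.
  constructor; simpl.
  - unfold Rdiv. destruct (Req_dec t 0). subst. rewrite Rinv_0. lra.
    apply Rmult_le_pos; auto. left; apply Rinv_0_lt_compat; lra.
  - auto.
Qed.

Lemma in_dweighted {A} (l : list (R * A)) y : In y (map snd (dweighted l)) -> In y (map snd l).
Proof.
  unfold dweighted. generalize (fold_right Rplus 0 (map fst l)). intros t.
  induction l as [|[w x] l IH]; simpl; auto. intuition.
Qed.

Lemma mass_diid {A} k (m : dist A) : mass (diid k m) = mass m ^ k.
Proof.
  induction k; simpl.
  - unfold mass; rewrite E_dret; lra.
  - unfold mass at 1. rewrite E_dbind.
    rewrite (E_ext _ _ (fun _ => mass m ^ k)).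
    + rewrite E_const. fold (mass m). lra.
    + intros x _. rewrite E_dbind. rewrite (E_ext _ (fun x0 => E (dret (x :: x0)) (fun _ => 1)) (fun _ => 1)).
      * rewrite E_const. rewrite IHk. lra.
      * intros; rewrite E_dret; auto.
Qed.

Lemma nonneg_diid {A} k (m : dist A) : nonneg m -> nonneg (diid k m).
Proof.
  intros H; induction k; simpl. apply nonneg_dret.
  apply nonneg_dbind; auto. intros. apply nonneg_dbind; auto. intros; apply nonneg_dret.
Qed.

Lemma in_diid {A} k (m : dist A) us : In us (map snd (diid k m)) -> length us = k.
Proof.
  revert us; induction k; simpl; intros us H.
  - destruct H as [H|[]]; subst; auto.
  - apply in_dbind in H. destruct H as [x [_ H]]. apply in_dbind in H.
    destruct H as [xs [Hx H]]. apply in_dret in H. subst. simpl. f_equal; auto.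
Qed.


Fixpoint rsum (g : nat -> R) (n : nat) : R :=
  match n with O => 0 | S k => rsum g k + g k end.

Fixpoint scount (is : list bool) (v : nat) : nat :=
  match v with O => O | S k => (scount is k + (if nth k is false then 1 else 0))%nat end.

Lemma rsum_ext g h n : (forall k, (k < n)%nat -> g k = h k) -> rsum g n = rsum h n.
Proof. induction n; intros H; simpl; auto. rewrite IHn, H; auto. Qed.

Lemma rsum_le g h n : (forall k, (k < n)%nat -> g k <= h k) -> rsum g n <= rsum h n.
Proof. induction n; intros H; simpl; [lra|]. assert (g n <= h n) by auto.
  assert (rsum g n <= rsum h n) by auto. lra. Qed.

Lemma rsum_plus g h n : rsum (fun k => g k + h k) n = rsum g n + rsum h n.
Proof. induction n; simpl; [lra|]. rewrite IHn; lra. Qed.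

Lemma rsum_scal c g n : rsum (fun k => c * g k) n = c * rsum g n.
Proof. induction n; simpl; [lra|]. rewrite IHn; lra. Qed.

Lemma rsum_const c n : rsum (fun _ => c) n = INR n * c.
Proof. induction n; simpl rsum; [simpl; lra|]. rewrite IHn, S_INR; lra. Qed.

Lemma rsum_nonneg g n : (forall k, (k < n)%nat -> 0 <= g k) -> 0 <= rsum g n.
Proof. intros H. replace 0 with (rsum (fun _ => 0) n). apply rsum_le; auto.
  rewrite rsum_const; lra. Qed.

Lemma rsum_ge_term g n k : (forall j, (j < n)%nat -> 0 <= g j) -> (k < n)%nat -> g k <= rsum g n.
Proof.
  induction n; intros H Hk; [lia|]. simpl.
  destruct (Nat.eq_dec k n).
  - subst. assert (0 <= rsum g n) by (apply rsum_nonneg; auto). lra.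
  - assert (g k <= rsum g n) by (apply IHn; auto; lia). assert (0 <= g n) by auto. lra.
Qed.

Lemma scount_app is b v : (v <= length is)%nat -> scount (is ++ [b]) v = scount is v.
Proof.
  induction v; intros H; simpl; auto. rewrite IHv by lia. rewrite app_nth1 by lia. auto.
Qed.

Lemma scount_le is v : (scount is v <= v)%nat.
Proof. induction v; simpl; auto. destruct (nth v is false); lia. Qed.

Lemma scount_mono is v w : (v <= w)%nat -> (scount is v <= scount is w)%nat.
Proof. induction 1; simpl; auto. lia. Qed.

Lemma scount_exists is v c : (c < scount is v)%nat ->
  exists u, (u < v)%nat /\ nth u is false = true /\ scount is u = c.
Proof.
  induction v; simpl; intros H; [lia|].
  destruct (Nat.lt_ge_cases c (scount is v)).
  - destruct (IHv H0) as [u [? [? ?]]]. exists u; repeat split; auto.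
  - exists v. destruct (nth v is false) eqn:Hn; [|lia]. repeat split; auto. lia.
Qed.

Definition Inv (s : state) : Prop :=
  length (isseed s) = length (col s) /\
  ncol s = scount (isseed s) (length (col s)) /\
  (1 <= ncol s)%nat /\
  (forall u, (u < length (col s))%nat -> nth u (isseed s) false = true ->
      nth u (col s) O = scount (isseed s) u) /\
  (forall u, (u < length (col s))%nat -> (1 <= deg s u)%nat).

Lemma E_uniform_seq K f : E (map (fun x => (1, x)) (seq 0 K)) f = rsum f K.
Proof.
  induction K; [reflexivity|]. rewrite seq_S, map_app, E_app, IHK. simpl.
  unfold E; simpl. lra.
Qed.

Lemma mass_degpick_pos s l u0 : In u0 l -> (1 <= deg s u0)%nat ->
  mass (map (fun u => (INR (deg s u), u)) l) > 0.
Proof.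
  unfold mass, E. induction l as [|x l IH]; simpl; [tauto|]. intros [H|H] Hd.
  - subst. assert (0 <= fold_right Rplus 0 (map (fun px => fst px * 1) (map (fun u => (INR (deg s u), u)) l))).
    { clear. induction l; simpl; [lra|]. pose proof (pos_INR (deg s a)). lra. }
    apply le_INR in Hd. simpl in Hd. lra.
  - specialize (IH H Hd). pose proof (pos_INR (deg s x)). lra.
Qed.

Lemma nonneg_degpick s l : nonneg (degpick s l).
Proof.
  unfold degpick. apply nonneg_dweighted. unfold nonneg. induction l; simpl; constructor; auto.
  simpl; apply pos_INR.
Qed.

Lemma mass_degpick s l u0 : In u0 l -> (1 <= deg s u0)%nat -> mass (degpick s l) = 1.
Proof. intros. unfold degpick. apply mass_dweighted. pose proof (mass_degpick_pos s l u0 H H0). lra. Qed.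

Lemma nonneg_duniform {A} (l : list A) : nonneg (duniform l).
Proof.
  unfold duniform. apply nonneg_dweighted. unfold nonneg. induction l; simpl; constructor; auto.
  simpl; lra.
Qed.

Lemma mass_duniform {A} (l : list A) : l <> [] -> mass (duniform l) = 1.
Proof.
  intros H. unfold duniform. apply mass_dweighted. destruct l as [|x l]; [congruence|].
  unfold mass, E. simpl. assert (0 <= fold_right Rplus 0 (map (fun px => fst px * 1) (map (fun x0 => (1, x0)) l))).
  { clear. induction l; simpl; lra. } lra.
Qed.

Lemma in_nodes s u : In u (nodes s) <-> (u < length (col s))%nat.
Proof. unfold nodes. rewrite in_seq. lia. Qed.

Lemma seed_exists s c : Inv s -> (c < ncol s)%nat ->
  exists u, (u < length (col s))%nat /\ nth u (isseed s) false = true /\ nth u (col s) O = c.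
Proof.
  intros [H1 [H2 [H3 [H4 H5]]]] Hc. rewrite H2 in Hc.
  destruct (scount_exists _ _ _ Hc) as [u [? [? ?]]]. exists u; repeat split; auto.
  rewrite H4; auto.
Qed.

Lemma ln_ge1 x : 3 <= x -> 1 <= ln x.
Proof.
  intros H. pose proof exp_le_3. rewrite <- (ln_exp 1).
  destruct (Req_dec (exp 1) x). rewrite H1; lra.
  left. apply ln_increasing. apply exp_pos. lra.
Qed.

Lemma INR3 i : (3 <= i)%nat -> 3 <= INR i.
Proof. intros H. apply le_INR in H. simpl in H. lra. Qed.

Lemma p_new_bounds a i : 0 < a -> (3 <= i)%nat -> 0 <= p_new a i <= 1.
Proof.
  intros Ha Hi. unfold p_new, Rpower. split; [left; apply exp_pos|].
  assert (H3 : 1 <= ln (INR i)) by (apply ln_ge1, INR3; auto).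
  assert (0 <= ln (ln (INR i))).
  { rewrite <- ln_1. destruct (Req_dec 1 (ln (INR i))). rewrite H; lra.
    left; apply ln_increasing; lra. }
  rewrite <- exp_0. destruct (Req_dec (- a * ln (ln (INR i))) 0). rewrite H0; lra.
  left; apply exp_increasing. nra.
Qed.

Lemma Inv_len s : Inv s -> (1 <= length (col s))%nat.
Proof. intros [H1 [H2 [H3 _]]]. pose proof (scount_le (isseed s) (length (col s))). lia. Qed.

Lemma seeds_nonempty s : Inv s -> seeds s <> [].
Proof.
  intros HI. destruct (seed_exists s 0 HI) as [u [Hu [Hs _]]]. destruct HI as [_ [_ [? _]]]; lia.
  intros Hn. assert (In u (seeds s)). { unfold seeds. apply filter_In. split; auto. apply in_nodes; auto. }
  rewrite Hn in H; auto.
Qed.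

Lemma E_step a d i s F : 0 < a -> (3 <= i)%nat -> Inv s ->
  E (step a d i s) (fun s' => F (col s') (isseed s')) =
  p_new a i * F (col s ++ [ncol s]) (isseed s ++ [true]) +
  (1 - p_new a i) * (rsum (fun c => F (col s ++ [c]) (isseed s ++ [false])) (ncol s) / INR (ncol s)).
Proof.
  intros Ha Hi HI. pose proof (Inv_len s HI) as HL. unfold step. rewrite E_dbind, E_dbern. f_equal; f_equal.
  - rewrite E_dbind.
    rewrite (E_ext _ _ (fun _ => F (col s ++ [ncol s]) (isseed s ++ [true]))).
    + rewrite E_const. rewrite (mass_degpick s (nodes s) 0%nat). lra.
      apply in_nodes. lia.
      destruct HI as [_ [_ [_ [_ H5]]]]. apply H5. lia.
    + intros u _. rewrite E_dbind.
      rewrite (E_ext _ _ (fun _ => F (col s ++ [ncol s]) (isseed s ++ [true]))).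
      * rewrite E_const, mass_diid, mass_duniform, pow1 by (apply seeds_nonempty; auto). lra.
      * intros; rewrite E_dret; reflexivity.
  - rewrite E_dbind. unfold duniform. rewrite E_dweighted.
    rewrite (E_ext _ _ (fun c => F (col s ++ [c]) (isseed s ++ [false]))).
    + rewrite E_uniform_seq. unfold mass. rewrite E_uniform_seq. rewrite rsum_const. rewrite Rmult_1_r. reflexivity.
    + intros c Hc. rewrite in_map_iff in Hc. destruct Hc as [[w c'] [Hc1 Hc2]]. simpl in Hc1; subst c'.
      rewrite in_map_iff in Hc2. destruct Hc2 as [c' [Hc3 Hc4]]. injection Hc3; intros; subst.
      apply in_seq in Hc4. rewrite E_dbind.
      rewrite (E_ext _ _ (fun _ => F (col s ++ [c]) (isseed s ++ [false]))).
      * rewrite E_const, mass_diid. 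
        destruct (seed_exists s c HI) as [u [Hu [Hs Hcol]]]; [lia|].
        rewrite (mass_degpick s (of_color s c) u), pow1. lra.
        unfold of_color. apply filter_In. split. apply in_nodes; auto. apply Nat.eqb_eq; auto.
        destruct HI as [_ [_ [_ [_ H5]]]]. apply H5; auto.
      * intros; rewrite E_dret; reflexivity.
Qed.

Lemma deg_mono (c c' : list nat) (i i' : list bool) (e e' : list (nat*nat)) (k k' u : nat) :
  (deg (mkState c i e k) u <= deg (mkState c' i' (e ++ e') k') u)%nat.
Proof. unfold deg; simpl. rewrite filter_app, length_app. lia. Qed.

Lemma deg_new (c' : list nat) (i' : list bool) (e : list (nat*nat)) (k' v : nat) (us : list nat) :
  us <> [] -> (1 <= deg (mkState c' i' (e ++ map (fun w => (v, w)) us) k') v)%nat.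
Proof.
  intros H. unfold deg; simpl. rewrite filter_app, length_app. destruct us as [|w us]; [congruence|].
  simpl. rewrite Nat.eqb_refl. simpl. lia.
Qed.

Lemma nth_app_last {A} (l : list A) x d : nth (length l) (l ++ [x]) d = x.
Proof. rewrite app_nth2 by lia. rewrite Nat.sub_diag. reflexivity. Qed.

Lemma nth_app_last' {A} (l : list A) x d n : n = length l -> nth n (l ++ [x]) d = x.
Proof. intros; subst; apply nth_app_last. Qed.

Lemma scount_app_S' is b L : length is = L -> scount (is ++ [b]) (L + 1) = (scount is L + if b then 1 else 0)%nat.
Proof. intros; subst. rewrite Nat.add_1_r. simpl. rewrite scount_app by lia. rewrite nth_app_last. reflexivity. Qed.

Lemma scount_app_S is b : scount (is ++ [b]) (S (length is)) = (scount is (length is) + if b then 1 else 0)%nat.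
Proof. simpl. rewrite scount_app by lia. rewrite nth_app_last. reflexivity. Qed.

Lemma step_support a d i s s' : (1 <= d)%nat -> Inv s -> In s' (map snd (step a d i s)) ->
  Inv s' /\ length (col s') = S (length (col s)).
Proof.
  intros Hd HI Hs'. pose proof HI as [H1 [H2 [H3 [H4 H5]]]]. unfold step in Hs'.
  apply in_dbind in Hs'. destruct Hs' as [b [_ Hb]]. destruct b.
  - apply in_dbind in Hb. destruct Hb as [u0 [_ Hb]]. apply in_dbind in Hb. destruct Hb as [us [_ Hb]].
    apply in_dret in Hb. subst s'. simpl. rewrite length_app. simpl.
    split; [|lia]. unfold Inv; simpl. rewrite !length_app, H1. simpl.
    split; [reflexivity|]. split.
    { rewrite scount_app_S' by auto. lia. }
    split; [lia|]. split.
    + intros u Hu Hs. destruct (Nat.eq_dec u (length (col s))).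
      * subst. rewrite nth_app_last' by auto. rewrite scount_app by lia. lia.
      * rewrite app_nth1 by lia. rewrite app_nth1 in Hs by lia. rewrite scount_app by lia. apply H4; auto; lia.
    + intros u Hu. destruct (Nat.eq_dec u (length (col s))).
      * subst. apply (deg_new _ _ _ _ _ (u0 :: us)). congruence.
      * eapply Nat.le_trans; [apply (H5 u); lia|]. destruct s; apply deg_mono.
  - apply in_dbind in Hb. destruct Hb as [c [Hc Hb]]. apply in_dbind in Hb. destruct Hb as [us [Hus Hb]].
    apply in_dret in Hb. subst s'. simpl. rewrite length_app. simpl.
    apply in_diid in Hus.
    split; [|lia]. unfold Inv; simpl. rewrite !length_app, H1. simpl.
    split; [reflexivity|]. split.
    { rewrite scount_app_S' by auto. lia. }
    split; [lia|]. split.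
    + intros u Hu Hs. destruct (Nat.eq_dec u (length (col s))).
      * subst. rewrite nth_app_last' in Hs by auto. discriminate.
      * rewrite app_nth1 by lia. rewrite app_nth1 in Hs by lia. rewrite scount_app by lia. apply H4; auto; lia.
    + intros u Hu. destruct (Nat.eq_dec u (length (col s))).
      * subst u. apply (deg_new _ _ _ _ _ us). intros Hn; rewrite Hn in Hus; simpl in Hus; lia.
      * eapply Nat.le_trans; [apply (H5 u); lia|]. destruct s; apply deg_mono.
Qed.

Lemma nonneg_step a d i s : 0 < a -> (3 <= i)%nat -> nonneg (step a d i s).
Proof.
  intros Ha Hi. unfold step. apply nonneg_dbind. apply nonneg_dbern, p_new_bounds; auto.
  intros [|] _.
  - apply nonneg_dbind. apply nonneg_degpick. intros; apply nonneg_dbind.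
    apply nonneg_diid, nonneg_duniform. intros; apply nonneg_dret.
  - apply nonneg_dbind. apply nonneg_duniform. intros; apply nonneg_dbind.
    apply nonneg_diid, nonneg_degpick. intros; apply nonneg_dret.
Qed.

Lemma mass_step a d i s : 0 < a -> (3 <= i)%nat -> Inv s -> mass (step a d i s) = 1.
Proof.
  intros Ha Hi HI. unfold mass.
  pose proof (E_step a d i s (fun _ _ => 1) Ha Hi HI) as H. simpl in H. rewrite H.
  rewrite rsum_const. destruct HI as [_ [_ [H3 _]]]. apply le_INR in H3. simpl in H3.
  field_simplify; [lra|lra].
Qed.

Lemma Inv_G2 : Inv G2.
Proof.
  unfold Inv, G2; simpl. split; auto. split; auto. split; auto. split.
  - intros u Hu Hs. destruct u as [|[|u]]; simpl; auto; lia.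
  - intros u Hu. unfold deg; simpl. destruct u as [|[|u]]; simpl; lia.
Qed.

Lemma gen_props a d k : 0 < a -> (1 <= d)%nat ->
  nonneg (gen a d k) /\ mass (gen a d k) = 1 /\
  forall s, In s (map snd (gen a d k)) -> Inv s /\ length (col s) = (k + 2)%nat.
Proof.
  intros Ha Hd. induction k as [|k [IH1 [IH2 IH3]]]; simpl.
  - split; [apply nonneg_dret|]. split; [unfold mass; rewrite E_dret; auto|].
    intros s Hs. apply in_dret in Hs; subst. split; [apply Inv_G2|reflexivity].
  - split; [|split].
    + apply nonneg_dbind; auto. intros; apply nonneg_step; auto; lia.
    + unfold mass. rewrite E_dbind. rewrite (E_ext _ _ (fun _ => 1)). apply IH2.
      intros s Hs. apply mass_step; auto. lia. apply IH3; auto.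
    + intros s' Hs'. apply in_dbind in Hs'. destruct Hs' as [s [Hs Hs']].
      destruct (IH3 s Hs) as [HI HL]. destruct (step_support a d _ s s' Hd HI Hs'). split; auto. lia.
Qed.

Lemma supermart a d k (Y : list nat -> list bool -> R) : 0 < a -> (1 <= d)%nat ->
  (forall s, Inv s -> (2 <= length (col s))%nat ->
     E (step a d (S (length (col s))) s) (fun s' => Y (col s') (isseed s')) <= Y (col s) (isseed s)) ->
  E (gen a d k) (fun s => Y (col s) (isseed s)) <= Y (col G2) (isseed G2).
Proof.
  intros Ha Hd H. induction k; simpl.
  - rewrite E_dret. apply Rle_refl.
  - rewrite E_dbind. eapply Rle_trans; [|apply IHk].
    destruct (gen_props a d k Ha Hd) as [Hn [_ Hs]].
    apply E_le; auto. intros s Hin. destruct (Hs s Hin) as [HI HL].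
    replace (k + 3)%nat with (S (length (col s))) by lia. apply H; auto. lia.
Qed.


Definition Sp (c : nat) (cl : list nat) (is : list bool) : R :=
  rsum (fun u => if negb (nth u is false) && Nat.eqb (nth u cl O) c then 1 else 0) (length cl).

Definition rate (is : list bool) (c v : nat) : R :=
  if (2 <=? v)%nat && (c <? scount is v)%nat then / INR (scount is v) else 0.

Definition rateT (a : R) (is : list bool) (c v : nat) : R :=
  if (2 <=? v)%nat && (c <? scount is v)%nat then (1 - p_new a (S v)) / INR (scount is v) else 0.

Definition pterm (a : R) (v : nat) : R := if (2 <=? v)%nat then p_new a (S v) else 0.

Definition Y2 (l : R) (c : nat) (cl : list nat) (is : list bool) : R :=
  exp (l * Sp c cl is - (exp l - 1) * rsum (rate is c) (length cl)).

Definition Y1 (a l : R) (c : nat) (cl : list nat) (is : list bool) : R :=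
  exp (- l * Sp c cl is + (1 - exp (- l)) * rsum (rateT a is c) (length cl)).

Definition KU (a l : R) (cl : list nat) (is : list bool) : R :=
  exp (l * (INR (scount is (length cl)) - 2) - (exp l - 1) * rsum (pterm a) (length cl)).

Definition KL (a l : R) (m2 : nat) (cl : list nat) (is : list bool) : R :=
  exp (- l * (INR (scount is (min (length cl) m2)) - 2) + (1 - exp (- l)) * rsum (pterm a) (min (length cl) m2)).

Lemma rsum_S g n : rsum g (S n) = rsum g n + g n.
Proof. reflexivity. Qed.

Lemma rsum_app_last f' f L : (forall v, (v < L)%nat -> f' v = f v) -> rsum f' (S L) = rsum f L + f' L.
Proof. intros H. simpl. rewrite (rsum_ext f' f); auto. Qed.

Lemma Sp_app c cl is x b : length is = length cl ->
  Sp c (cl ++ [x]) (is ++ [b]) = Sp c cl is + (if negb b && Nat.eqb x c then 1 else 0).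
Proof.
  intros H. unfold Sp. rewrite length_app. simpl. rewrite Nat.add_1_r.
  rewrite (rsum_app_last _ (fun u => if negb (nth u is false) && Nat.eqb (nth u cl O) c then 1 else 0)).
  - rewrite nth_app_last' by auto. rewrite nth_app_last' by auto. reflexivity.
  - intros v Hv. rewrite !app_nth1 by lia. reflexivity.
Qed.

Lemma rate_app is b c v : (v <= length is)%nat -> rate (is ++ [b]) c v = rate is c v.
Proof. intros. unfold rate. rewrite scount_app; auto. Qed.

Lemma rateT_app a is b c v : (v <= length is)%nat -> rateT a (is ++ [b]) c v = rateT a is c v.
Proof. intros. unfold rateT. rewrite scount_app; auto. Qed.

Lemma rsum_rate_app is b c L : length is = L ->
  rsum (rate (is ++ [b]) c) (S L) = rsum (rate is c) L + rate is c L.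
Proof.
  intros H. rewrite (rsum_app_last _ (rate is c)). rewrite rate_app; auto; lia.
  intros; apply rate_app; lia.
Qed.

Lemma rsum_rateT_app a is b c L : length is = L ->
  rsum (rateT a (is ++ [b]) c) (S L) = rsum (rateT a is c) L + rateT a is c L.
Proof.
  intros H. rewrite (rsum_app_last _ (rateT a is c)). rewrite rateT_app; auto; lia.
  intros; apply rateT_app; lia.
Qed.

Lemma rsum_indic c K x : rsum (fun c' => if Nat.eqb c' c then x else 1) K =
  INR K + (if (c <? K)%nat then x - 1 else 0).
Proof.
  induction K; simpl rsum.
  - simpl. destruct c; simpl; lra.
  - rewrite IHK. rewrite S_INR.
    destruct (Nat.eqb K c) eqn:E1.
    + apply Nat.eqb_eq in E1; subst. rewrite (proj2 (Nat.ltb_ge c c)) by lia.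
      rewrite (proj2 (Nat.ltb_lt c (S c))) by lia. lra.
    + apply Nat.eqb_neq in E1. destruct (c <? K)%nat eqn:E2.
      * apply Nat.ltb_lt in E2. rewrite (proj2 (Nat.ltb_lt c (S K))) by lia. lra.
      * apply Nat.ltb_ge in E2. rewrite (proj2 (Nat.ltb_ge c (S K))) by lia. lra.
Qed.

Lemma exp_1mx x : exp x * (1 - x) <= 1.
Proof.
  pose proof (exp_ineq1_le (- x)). pose proof (exp_pos x).
  replace 1 with (exp x * exp (- x)) at 2. apply Rmult_le_compat_l; lra.
  rewrite <- exp_plus. replace (x + - x) with 0 by ring. apply exp_0.
Qed.

Lemma exp_1px x : exp (- x) * (1 + x) <= 1.
Proof. pose proof (exp_1mx (- x)). replace (1 + x) with (1 - - x) by ring. auto. Qed.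

Lemma Inv_K s : Inv s -> 1 <= INR (ncol s).
Proof. intros [_ [_ [H _]]]. apply le_INR in H. simpl in H; auto. Qed.

Lemma length_app1 {A} (l : list A) x : length (l ++ [x]) = S (length l).
Proof. rewrite length_app; simpl; lia. Qed.

Lemma Y2_super a d l c s : 0 < a -> 0 <= l -> Inv s -> (2 <= length (col s))%nat ->
  E (step a d (S (length (col s))) s) (fun s' => Y2 l c (col s') (isseed s')) <= Y2 l c (col s) (isseed s).
Proof.
  intros Ha Hl HI HL. pose proof HI as [H1 [H2 [H3 _]]].
  rewrite E_step by (auto; lia). unfold Y2. rewrite !length_app1.
  rewrite Sp_app by auto. rewrite rsum_rate_app by auto. simpl (negb true && _).
  set (S0 := Sp c (col s) (isseed s)). set (R0 := rsum (rate (isseed s) c) (length (col s))).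
  set (r := rate (isseed s) c (length (col s))). set (p := p_new a (S (length (col s)))).
  set (Y := exp (l * S0 - (exp l - 1) * R0)). set (Z := exp (- (exp l - 1) * r)).
  replace (if false then 1 else 0) with 0 by reflexivity.
  assert (Hnew : exp (l * (S0 + 0) - (exp l - 1) * (R0 + r)) = Y * Z).
  { unfold Y, Z. rewrite <- exp_plus. f_equal. ring. }
  rewrite Hnew.
  rewrite (rsum_ext _ (fun c' => (Y * Z) * (if Nat.eqb c' c then exp l else 1))).
  2:{ intros k _. rewrite length_app1, rsum_rate_app by auto. rewrite Sp_app by auto. simpl (negb false && _).
      destruct (Nat.eqb k c); unfold Y, Z, S0, R0, r; [|rewrite Rmult_1_r]; rewrite <- !exp_plus; f_equal; ring. }
  rewrite rsum_scal, rsum_indic.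
  assert (HK := Inv_K s HI). assert (Hp : 0 <= p <= 1) by (apply p_new_bounds; auto; lia).
  assert (HY : 0 < Y) by apply exp_pos. assert (HZ : 0 < Z) by apply exp_pos.
  assert (He : 1 <= exp l) by (pose proof (exp_ineq1_le l); lra).
  destruct (c <? ncol s)%nat eqn:Hc.
  - assert (Hr : r = / INR (ncol s)).
    { unfold r, rate. rewrite <- H2.
      replace ((2 <=? length (col s))%nat) with true by (symmetry; apply Nat.leb_le; auto).
      rewrite Hc. reflexivity. }
    set (q := (exp l - 1) / INR (ncol s)).
    assert (Hq : 0 <= q) by (unfold q; apply Rmult_le_pos; [lra|left; apply Rinv_0_lt_compat; lra]).
    assert (HZq : Z = exp (- q)) by (unfold Z, q; rewrite Hr; f_equal; unfold Rdiv; ring).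
    assert (E1 : p * (Y * Z) + (1 - p) * (Y * Z * (INR (ncol s) + (exp l - 1)) / INR (ncol s))
                 = Y * (Z * (1 + (1 - p) * q))).
    { unfold q. field. lra. }
    rewrite E1. rewrite <- (Rmult_1_r Y) at 2. apply Rmult_le_compat_l; [lra|].
    rewrite HZq. eapply Rle_trans; [|apply (exp_1px q)].
    apply Rmult_le_compat_l; [left; apply exp_pos|]. nra.
  - assert (Hr : r = 0).
    { unfold r, rate. rewrite <- H2. rewrite Hc. rewrite andb_false_r. reflexivity. }
    assert (HZ1 : Z = 1) by (unfold Z; rewrite Hr; rewrite Rmult_0_r; apply exp_0).
    rewrite HZ1. right. field. lra.
Qed.

Lemma Y1_super a d l c s : 0 < a -> Inv s -> (2 <= length (col s))%nat ->
  E (step a d (S (length (col s))) s) (fun s' => Y1 a l c (col s') (isseed s')) <= Y1 a l c (col s) (isseed s).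
Proof.
  intros Ha HI HL. pose proof HI as [H1 [H2 [H3 _]]].
  rewrite E_step by (auto; lia). unfold Y1. rewrite !length_app1.
  rewrite Sp_app by auto. rewrite rsum_rateT_app by auto. simpl (negb true && _).
  set (S0 := Sp c (col s) (isseed s)). set (R0 := rsum (rateT a (isseed s) c) (length (col s))).
  set (r := rateT a (isseed s) c (length (col s))). set (p := p_new a (S (length (col s)))).
  set (b := 1 - exp (- l)).
  set (Y := exp (- l * S0 + b * R0)). set (Z := exp (b * r)).
  replace (if false then 1 else 0) with 0 by reflexivity.
  assert (Hnew : exp (- l * (S0 + 0) + b * (R0 + r)) = Y * Z).
  { unfold Y, Z. rewrite <- exp_plus. f_equal. ring. }
  rewrite Hnew.
  rewrite (rsum_ext _ (fun c' => (Y * Z) * (if Nat.eqb c' c then exp (- l) else 1))).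
  2:{ intros k _. rewrite length_app1, rsum_rateT_app by auto. rewrite Sp_app by auto. simpl (negb false && _).
      destruct (Nat.eqb k c); unfold Y, Z, S0, R0, r; [|rewrite Rmult_1_r]; rewrite <- !exp_plus; f_equal; ring. }
  rewrite rsum_scal, rsum_indic.
  assert (HK := Inv_K s HI). assert (Hp : 0 <= p <= 1) by (apply p_new_bounds; auto; lia).
  assert (HY : 0 < Y) by apply exp_pos. assert (HZ : 0 < Z) by apply exp_pos.
  destruct (c <? ncol s)%nat eqn:Hc.
  - assert (Hr : r = (1 - p) / INR (ncol s)).
    { unfold r, rateT. rewrite <- H2.
      replace ((2 <=? length (col s))%nat) with true by (symmetry; apply Nat.leb_le; auto).
      rewrite Hc. reflexivity. }
    set (x := b * (1 - p) / INR (ncol s)).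
    assert (HZq : Z = exp x) by (unfold Z, x; rewrite Hr; f_equal; unfold Rdiv; ring).
    assert (E1 : p * (Y * Z) + (1 - p) * (Y * Z * (INR (ncol s) + (exp (- l) - 1)) / INR (ncol s))
                 = Y * (Z * (1 - x))).
    { unfold x, b. field. lra. }
    rewrite E1. rewrite <- (Rmult_1_r Y) at 2. apply Rmult_le_compat_l; [lra|].
    rewrite HZq. apply exp_1mx.
  - assert (Hr : r = 0).
    { unfold r, rateT. rewrite <- H2. rewrite Hc. rewrite andb_false_r. reflexivity. }
    assert (HZ1 : Z = 1) by (unfold Z; rewrite Hr; rewrite Rmult_0_r; apply exp_0).
    rewrite HZ1. right. field. lra.
Qed.

Lemma scount_app_S2 is b L : length is = L -> scount (is ++ [b]) (S L) = (scount is L + if b then 1 else 0)%nat.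
Proof. intros; subst; apply scount_app_S. Qed.

Lemma rsum_pterm_S a L : rsum (pterm a) (S L) = rsum (pterm a) L + pterm a L.
Proof. reflexivity. Qed.

Lemma pterm_L a L : (2 <= L)%nat -> pterm a L = p_new a (S L).
Proof. intros; unfold pterm. replace ((2 <=? L)%nat) with true by (symmetry; apply Nat.leb_le; auto). auto. Qed.

Lemma KU_super a d l s : 0 < a -> 0 <= l -> Inv s -> (2 <= length (col s))%nat ->
  E (step a d (S (length (col s))) s) (fun s' => KU a l (col s') (isseed s')) <= KU a l (col s) (isseed s).
Proof.
  intros Ha Hl HI HL. pose proof HI as [H1 [H2 [H3 _]]].
  rewrite E_step by (auto; lia). unfold KU.
  set (p := p_new a (S (length (col s)))).
  set (Y := exp (l * (INR (scount (isseed s) (length (col s))) - 2) - (exp l - 1) * rsum (pterm a) (length (col s)))).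
  rewrite (rsum_ext _ (fun _ => Y * exp (- ((exp l - 1) * p))) (ncol s)).
  2:{ intros k _. rewrite length_app1, scount_app_S2, rsum_pterm_S, pterm_L by auto.
      unfold Y. rewrite <- exp_plus. f_equal. rewrite plus_INR. simpl (INR 0). fold p. ring. }
  rewrite rsum_const.
  rewrite length_app1, scount_app_S2, rsum_pterm_S, pterm_L by auto. fold p.
  assert (HK := Inv_K s HI). assert (Hp : 0 <= p <= 1) by (apply p_new_bounds; auto; lia).
  assert (HY : 0 < Y) by apply exp_pos.
  assert (Hn : exp (l * (INR (scount (isseed s) (length (col s)) + 1) - 2) - (exp l - 1) * (rsum (pterm a) (length (col s)) + p))
     = Y * exp (- ((exp l - 1) * p)) * exp l).
  { unfold Y. rewrite <- !exp_plus. f_equal. rewrite plus_INR. simpl (INR 1). ring. }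
  rewrite Hn.
  set (q := (exp l - 1) * p).
  replace (p * (Y * exp (- q) * exp l) + (1 - p) * (INR (ncol s) * (Y * exp (- q)) / INR (ncol s)))
    with (Y * (exp (- q) * (1 + q))) by (unfold q; field; lra).
  rewrite <- (Rmult_1_r Y) at 2. apply Rmult_le_compat_l; [lra|]. apply exp_1px.
Qed.

Lemma KL_super a d l m2 s : 0 < a -> Inv s -> (2 <= length (col s))%nat ->
  E (step a d (S (length (col s))) s) (fun s' => KL a l m2 (col s') (isseed s')) <= KL a l m2 (col s) (isseed s).
Proof.
  intros Ha HI HL. pose proof HI as [H1 [H2 [H3 _]]].
  rewrite E_step by (auto; lia). unfold KL.
  assert (HK := Inv_K s HI).
  set (p := p_new a (S (length (col s)))).
  assert (Hp : 0 <= p <= 1) by (apply p_new_bounds; auto; lia).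
  destruct (le_lt_dec m2 (length (col s))) as [Hm|Hm].
  - set (Y := exp (- l * (INR (scount (isseed s) (Init.Nat.min (length (col s)) m2)) - 2) +
        (1 - exp (- l)) * rsum (pterm a) (Init.Nat.min (length (col s)) m2))).
    rewrite (rsum_ext _ (fun _ => Y) (ncol s)).
    2:{ intros k _. rewrite length_app1. unfold Y. rewrite !Nat.min_r by lia. rewrite scount_app by lia. reflexivity. }
    rewrite length_app1. rewrite (Nat.min_r (S _)) by lia. rewrite scount_app by lia.
    rewrite <- (Nat.min_r (length (col s)) m2) at 1 2 by lia. fold Y.
    rewrite rsum_const. right. field. lra.
  - set (b := 1 - exp (- l)).
    set (Y := exp (- l * (INR (scount (isseed s) (length (col s))) - 2) + b * rsum (pterm a) (length (col s)))).
    rewrite (rsum_ext _ (fun _ => Y * exp (b * p)) (ncol s)).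
    2:{ intros k _. rewrite length_app1. rewrite Nat.min_l by lia.
        rewrite scount_app_S2, rsum_pterm_S, pterm_L by auto.
        unfold Y. rewrite <- exp_plus. f_equal. rewrite plus_INR. simpl (INR 0). fold p. ring. }
    rewrite rsum_const.
    rewrite length_app1. rewrite !Nat.min_l by lia.
    rewrite scount_app_S2, rsum_pterm_S, pterm_L by auto. fold p. fold Y.
    assert (HY : 0 < Y) by apply exp_pos.
    assert (Hn : exp (- l * (INR (scount (isseed s) (length (col s)) + 1) - 2) + b * (rsum (pterm a) (length (col s)) + p))
       = Y * exp (b * p) * exp (- l)).
    { unfold Y. rewrite <- !exp_plus. f_equal. rewrite plus_INR. simpl (INR 1). ring. }
    rewrite Hn.
    replace (p * (Y * exp (b * p) * exp (- l)) + (1 - p) * (INR (ncol s) * (Y * exp (b * p)) / INR (ncol s)))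
      with (Y * (exp (b * p) * (1 - b * p))) by (unfold b; field; lra).
    rewrite <- (Rmult_1_r Y) at 2. apply Rmult_le_compat_l; [lra|]. apply exp_1mx.
Qed.


Lemma filter_len_rsum (f : nat -> bool) n :
  INR (length (filter f (seq 0 n))) = rsum (fun u => if f u then 1 else 0) n.
Proof.
  induction n; [reflexivity|]. rewrite seq_S, filter_app, length_app. simpl.
  rewrite plus_INR, IHn. destruct (f n); simpl; lra.
Qed.

Lemma hsize_rsum s c : INR (hsize s c) = rsum (fun u => if Nat.eqb (nth u (col s) O) c then 1 else 0) (length (col s)).
Proof. unfold hsize, of_color, nodes. apply filter_len_rsum. Qed.

Lemma hsize_ge_Sp s c : Sp c (col s) (isseed s) <= INR (hsize s c).
Proof.
  rewrite hsize_rsum. unfold Sp. apply rsum_le. intros k _.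
  destruct (negb _); destruct (Nat.eqb _ _); simpl; lra.
Qed.

Lemma seedc_le1 s c v : Inv s -> (v <= length (col s))%nat ->
  rsum (fun u => if nth u (isseed s) false && Nat.eqb (nth u (col s) O) c then 1 else 0) v
  <= if (c <? scount (isseed s) v)%nat then 1 else 0.
Proof.
  intros HI. pose proof HI as [H1 [H2 [H3 [H4 H5]]]].
  induction v; intros Hv; simpl rsum; [simpl; destruct c; simpl; lra|].
  specialize (IHv ltac:(lia)). simpl scount.
  destruct (nth v (isseed s) false) eqn:Hs; simpl andb.
  - destruct (Nat.eqb (nth v (col s) O) c) eqn:Hc.
    + apply Nat.eqb_eq in Hc. rewrite H4 in Hc; [|lia|auto].
      rewrite (proj2 (Nat.ltb_ge c (scount (isseed s) v))) in IHv by lia.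
      rewrite (proj2 (Nat.ltb_lt c _)) by lia. lra.
    + destruct (c <? scount (isseed s) v)%nat eqn:E1.
      * apply Nat.ltb_lt in E1. rewrite (proj2 (Nat.ltb_lt c _)) by lia. lra.
      * match goal with |- context [(c <? ?x)%nat] => destruct (c <? x)%nat end; lra.
  - rewrite Nat.add_0_r. lra.
Qed.

Lemma hsize_le_Sp s c : Inv s -> INR (hsize s c) <= Sp c (col s) (isseed s) + 1.
Proof.
  intros HI. rewrite hsize_rsum. unfold Sp.
  pose proof (seedc_le1 s c (length (col s)) HI (le_n _)).
  assert (0 <= 1) by lra. 
  assert (rsum (fun u => if Nat.eqb (nth u (col s) O) c then 1 else 0) (length (col s)) =
    rsum (fun u => if negb (nth u (isseed s) false) && Nat.eqb (nth u (col s) O) c then 1 else 0) (length (col s))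
    + rsum (fun u => if nth u (isseed s) false && Nat.eqb (nth u (col s) O) c then 1 else 0) (length (col s))).
  { rewrite <- rsum_plus. apply rsum_ext. intros k _.
    destruct (nth k (isseed s) false); destruct (Nat.eqb _ _); simpl; lra. }
  rewrite H1. destruct (c <? _)%nat; lra.
Qed.

Lemma seed_time_spec s c : Inv s -> (c < ncol s)%nat ->
  exists u, seed_time s c = S u /\ (u < length (col s))%nat /\
    nth u (isseed s) false = true /\ nth u (col s) O = c.
Proof.
  intros HI Hc. unfold seed_time.
  destruct (filter _ (nodes s)) as [|u l] eqn:Hf.
  - exfalso. destruct (seed_exists s c HI Hc) as [u [Hu [Hs Hcol]]].
    assert (In u (filter (fun u => nth u (isseed s) false && Nat.eqb (nth u (col s) O) c) (nodes s))).
    { apply filter_In. split. apply in_nodes; auto. rewrite Hs, Hcol, Nat.eqb_refl; auto. }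
    rewrite Hf in H; auto.
  - assert (In u (filter (fun u => nth u (isseed s) false && Nat.eqb (nth u (col s) O) c) (nodes s))).
    { rewrite Hf; left; auto. }
    apply filter_In in H. destruct H as [Hin Hp]. apply in_nodes in Hin.
    apply andb_prop in Hp. destruct Hp as [Hp1 Hp2]. apply Nat.eqb_eq in Hp2.
    exists u; auto.
Qed.

Lemma rsum_lower g n m b : (forall v, (v < n)%nat -> 0 <= g v) ->
  (forall v, (m <= v < n)%nat -> b <= g v) -> INR (n - m) * b <= rsum g n.
Proof.
  induction n; intros H0 Hb.
  - simpl. lra.
  - simpl rsum. destruct (le_lt_dec (S n) m).
    + replace (S n - m)%nat with O by lia. simpl. 
      assert (0 <= rsum g n) by (apply rsum_nonneg; auto). assert (0 <= g n) by auto. lra.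
    + replace (S n - m)%nat with (S (n - m)) by lia. rewrite S_INR.
      assert (INR (n - m) * b <= rsum g n) by (apply IHn; intros; [apply H0|apply Hb]; lia).
      assert (b <= g n) by (apply Hb; lia). lra.
Qed.

Lemma rsum_upper g n m b : (forall v, (v < m)%nat -> (v < n)%nat -> g v <= 0) ->
  (forall v, (m <= v < n)%nat -> g v <= b) -> INR (n - m) * b >= rsum g n.
Proof.
  induction n; intros H0 Hb.
  - simpl. lra.
  - simpl rsum. destruct (le_lt_dec (S n) m).
    + replace (S n - m)%nat with O by lia. simpl.
      assert (rsum g n <= 0) by (replace 0 with (INR (n - m) * b) by (replace (n - m)%nat with O by lia; simpl; lra); apply Rge_le, IHn; intros; [apply H0|apply Hb]; lia).
      assert (g n <= 0) by (apply H0; lia). lra.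
    + replace (S n - m)%nat with (S (n - m)) by lia. rewrite S_INR.
      assert (INR (n - m) * b >= rsum g n) by (apply IHn; intros; [apply H0|apply Hb]; lia).
      assert (g n <= b) by (apply Hb; lia). lra.
Qed.

Lemma p_new_mono a i j : 0 < a -> (3 <= i <= j)%nat -> p_new a j <= p_new a i.
Proof.
  intros Ha Hij. unfold p_new, Rpower.
  assert (Hi : 3 <= INR i) by (apply INR3; lia). assert (Hj : INR i <= INR j) by (apply le_INR; lia).
  assert (1 <= ln (INR i)) by (apply ln_ge1; lra).
  assert (ln (INR i) <= ln (INR j)).
  { destruct (Req_dec (INR i) (INR j)). rewrite H0; lra. left; apply ln_increasing; lra. }
  assert (ln (ln (INR i)) <= ln (ln (INR j))).
  { destruct (Req_dec (ln (INR i)) (ln (INR j))). rewrite H1; lra. left; apply ln_increasing; lra. }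
  destruct (Req_dec (ln (ln (INR i))) (ln (ln (INR j)))). rewrite H2; lra.
  left; apply exp_increasing. nra.
Qed.

Definition cU a n k1 lu := lu * (k1 - 2) - (exp lu - 1) * rsum (pterm a) n.
Definition cL a m2 k0 ll := - ll * (k0 - 2) + (1 - exp (- ll)) * rsum (pterm a) m2.
Definition c2 n t k0 := (30 * ln (INR n) - 1) - (exp 1 - 1) * ((INR n - t) / k0).
Definition c1 a n m2 k1 := - 2 * ln (INR n) + (1 - exp (- 2)) * (INR (n - m2) * ((1 - p_new a (S m2)) / k1)).

Definition Fs a n m2 t k0 k1 lu ll (cl : list nat) (is : list bool) : R :=
  KU a lu cl is * exp (- cU a n k1 lu) + KL a ll m2 cl is * exp (- cL a m2 k0 ll) +
  rsum (fun c => Y2 1 c cl is * exp (- c2 n t k0) + Y1 a 2 c cl is * exp (- c1 a n m2 k1)) n.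

Lemma exp_ge_1 x y : x <= y -> 1 <= exp y * exp (- x).
Proof.
  intros H. rewrite <- exp_plus. rewrite <- exp_0. destruct (Req_dec (y + - x) 0).
  rewrite H0; lra. left; apply exp_increasing; lra.
Qed.

Lemma exp_mono x y : x <= y -> exp x <= exp y.
Proof. intros H. destruct (Req_dec x y). subst; lra. left; apply exp_increasing; lra. Qed.

Lemma Fs_nonneg a n m2 t k0 k1 lu ll cl is : 0 <= Fs a n m2 t k0 k1 lu ll cl is.
Proof.
  unfold Fs. assert (forall x y, 0 <= exp x * exp y) by (intros; left; apply Rmult_lt_0_compat; apply exp_pos).
  assert (0 <= rsum (fun c => Y2 1 c cl is * exp (- c2 n t k0) + Y1 a 2 c cl is * exp (- c1 a n m2 k1)) n).
  { apply rsum_nonneg. intros. unfold Y2, Y1. pose proof (H (1 * Sp k cl is - (exp 1 - 1) * rsum (rate is k) (length cl)) (- c2 n t k0)).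
    pose proof (H (- (2) * Sp k cl is + (1 - exp (- (2))) * rsum (rateT a is k) (length cl)) (- c1 a n m2 k1)). lra. }
  unfold KU, KL. pose proof (H (lu * (INR (scount is (length cl)) - 2) - (exp lu - 1) * rsum (pterm a) (length cl)) (- cU a n k1 lu)).
  pose proof (H (- ll * (INR (scount is (Init.Nat.min (length cl) m2)) - 2) + (1 - exp (- ll)) * rsum (pterm a) (Init.Nat.min (length cl) m2)) (- cL a m2 k0 ll)).
  lra.
Qed.

Lemma Rleb_true x y : Rleb x y = true <-> x <= y.
Proof. unfold Rleb. destruct (Rle_dec x y); split; intros; auto; discriminate || contradiction. Qed.

Lemma Rleb_false x y : Rleb x y = false -> y < x.
Proof. unfold Rleb. destruct (Rle_dec x y); intros; [discriminate|lra]. Qed.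

Lemma forallb_false_ex {A} (f : A -> bool) l : forallb f l = false -> exists x, In x l /\ f x = false.
Proof.
  induction l as [|x l IH]; simpl; [discriminate|]. destruct (f x) eqn:Hf; simpl.
  - intros H. destruct (IH H) as [y [? ?]]. exists y; auto.
  - intros _. exists x; auto.
Qed.

Lemma pointwise a n m2 k0 k1 lu ll s : 1 < a -> Inv s -> length (col s) = n ->
  (2 <= m2 <= n)%nat -> INR m2 <= T2 a n < INR m2 + 1 -> 0 < k0 -> 0 < lu -> 0 < ll ->
  (if good a n s then 0 else 1) <= Fs a n m2 (T2 a n) k0 k1 lu ll (col s) (isseed s).
Proof.
  intros Ha HI HL Hm2 Ht Hk0 Hlu Hll. pose proof HI as [H1 [H2 [H3 [H4 H5]]]].
  destruct (good a n s) eqn:G; [apply Fs_nonneg|].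
  set (cl := col s) in *. set (is := isseed s) in *.
  assert (Hpos : forall x y, 0 <= exp x * exp y) by (intros; left; apply Rmult_lt_0_compat; apply exp_pos).
  set (G2f := fun c => Y2 1 c cl is * exp (- c2 n (T2 a n) k0) + Y1 a 2 c cl is * exp (- c1 a n m2 k1)).
  assert (HG : forall c, 0 <= G2f c).
  { intros c. unfold G2f, Y2, Y1. pose proof (Hpos (1 * Sp c cl is - (exp 1 - 1) * rsum (rate is c) (length cl)) (- c2 n (T2 a n) k0)).
    pose proof (Hpos (- (2) * Sp c cl is + (1 - exp (- (2))) * rsum (rateT a is c) (length cl)) (- c1 a n m2 k1)). lra. }
  assert (HKU : 0 <= KU a lu cl is * exp (- cU a n k1 lu)) by apply Hpos.
  assert (HKL : 0 <= KL a ll m2 cl is * exp (- cL a m2 k0 ll)) by apply Hpos.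
  assert (HR : 0 <= rsum G2f n) by (apply rsum_nonneg; auto).
  unfold Fs. fold G2f.
  destruct (Rlt_le_dec k1 (INR (scount is n))) as [Hk1|Hk1].
  {
    assert (1 <= KU a lu cl is * exp (- cU a n k1 lu)); [|lra].
    unfold KU, cU. apply exp_ge_1. rewrite HL. nra. }
  destruct (Rlt_le_dec (INR (scount is m2)) k0) as [Hk0'|Hk0'].
  { assert (1 <= KL a ll m2 cl is * exp (- cL a m2 k0 ll)); [|lra].
    unfold KL, cL. apply exp_ge_1. rewrite HL. rewrite Nat.min_r by lia. nra. }
  unfold good in G. apply forallb_false_ex in G. destruct G as [c [Hc Hbad]].
  apply in_seq in Hc. assert (Hcn : (c < ncol s)%nat) by lia.
  assert (Hncn : (ncol s <= n)%nat) by (rewrite H2, <- HL; apply scount_le).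
  assert (1 <= G2f c); [|assert (G2f c <= rsum G2f n) by (apply rsum_ge_term; auto; lia); lra].
  destruct (seed_time_spec s c HI Hcn) as [u [Hst [Hu [Hus Huc]]]].
  rewrite Hst in Hbad. fold cl is in Hus, Huc, Hu.
  assert (Hscu : scount is u = c) by (rewrite <- Huc; symmetry; apply H4; auto).
  assert (HscSu : scount is (S u) = S c) by (simpl; rewrite Hus; lia).
  assert (HSp := hsize_ge_Sp s c). assert (HSp2 := hsize_le_Sp s c HI). fold cl is in HSp, HSp2.
  assert (Hk0pos : forall v, (m2 <= v)%nat -> k0 <= INR (scount is v)).
  { intros v Hv. eapply Rle_trans; [apply Hk0'|]. apply le_INR, scount_mono; auto. }
  destruct (Rleb (INR (S u)) (T2 a n)) eqn:Hle.
  -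
    apply Rleb_true in Hle. apply Rleb_false in Hbad.
    assert (HSu : (S u <= m2)%nat).
    { assert (INR (S u) < INR (S m2)) by (rewrite (S_INR m2); lra). apply INR_lt in H. lia. }
    assert (Hk1pos : 0 < k1).
    { eapply Rlt_le_trans; [|apply Hk1]. apply lt_0_INR. rewrite H2, HL in Hcn. lia. }
    assert (Hpm : 0 <= 1 - p_new a (S m2)) by (pose proof (p_new_bounds a (S m2) ltac:(lra) ltac:(lia)); lra).
    assert (HRt : INR (n - m2) * ((1 - p_new a (S m2)) / k1) <= rsum (rateT a is c) n).
    { apply rsum_lower.
      - intros v Hv. unfold rateT. destruct ((2 <=? v)%nat && (c <? scount is v)%nat) eqn:Eg; [|lra].
        apply andb_prop in Eg. destruct Eg as [Eg1 Eg2]. apply Nat.leb_le in Eg1. apply Nat.ltb_lt in Eg2.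
        pose proof (p_new_bounds a (S v) ltac:(lra) ltac:(lia)).
        apply Rmult_le_pos; [lra|]. left; apply Rinv_0_lt_compat, lt_0_INR; lia.
      - intros v Hv. unfold rateT.
        assert (Hsv : (S c <= scount is v)%nat) by (rewrite <- HscSu; apply scount_mono; lia).
        replace ((2 <=? v)%nat && (c <? scount is v)%nat) with true
          by (symmetry; apply andb_true_intro; split; [apply Nat.leb_le|apply Nat.ltb_lt]; lia).
        assert (Hpv : p_new a (S v) <= p_new a (S m2)) by (apply p_new_mono; [lra|lia]).
        assert (Hsc1 : INR (scount is v) <= k1).
        { eapply Rle_trans; [|apply Hk1]. apply le_INR, scount_mono; lia. }
        assert (Hsc0 : 0 < INR (scount is v)) by (apply lt_0_INR; lia).
        unfold Rdiv. apply Rle_trans with ((1 - p_new a (S m2)) * / INR (scount is v)).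
        + apply Rmult_le_compat_l; auto. apply Rinv_le_contravar; auto.
        + apply Rmult_le_compat_r; [left; apply Rinv_0_lt_compat; auto|lra]. }
    assert (He2 : exp (- 2) <= 1) by (rewrite <- exp_0; apply exp_mono; lra).
    assert (1 <= Y1 a 2 c cl is * exp (- c1 a n m2 k1)).
    { unfold Y1, c1. apply exp_ge_1. rewrite HL.
      replace (exp (-2)) with (exp (- (2))) by (f_equal; ring).
      assert (Hb : 0 <= 1 - exp (- (2))) by (assert (exp (- (2)) <= 1) by (rewrite <- exp_0; apply exp_mono; lra); lra).
      assert (0 <= (1 - exp (- (2))) * (rsum (rateT a is c) n - INR (n - m2) * ((1 - p_new a (S m2)) / k1)))
        by (apply Rmult_le_pos; lra).
      lra. }
    assert (0 <= Y2 1 c cl is * exp (- c2 n (T2 a n) k0)) by apply Hpos.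
    unfold G2f. lra.
  -
    apply Rleb_false in Hle. apply Rleb_false in Hbad.
    assert (HSu : (m2 < S u)%nat) by (apply INR_lt; lra).
    assert (HR2 : INR (n - S u) * / k0 >= rsum (rate is c) n).
    { apply rsum_upper.
      - intros v Hv _. unfold rate.
        assert (Hsv : (scount is v <= c)%nat) by (rewrite <- Hscu; apply scount_mono; lia).
        replace ((2 <=? v)%nat && (c <? scount is v)%nat) with false.
        lra. symmetry. apply andb_false_intro2. apply Nat.ltb_ge; lia.
      - intros v Hv. unfold rate. destruct ((2 <=? v)%nat && (c <? scount is v)%nat).
        + apply Rinv_le_contravar; auto. apply Hk0pos; lia.
        + left; apply Rinv_0_lt_compat; auto. }
    assert (HnSu : INR (n - S u) <= INR n - T2 a n).
    { rewrite minus_INR by lia. lra. }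
    assert (HR3 : rsum (rate is c) n <= (INR n - T2 a n) / k0).
    { unfold Rdiv. apply Rge_le in HR2. eapply Rle_trans; [apply HR2|].
      apply Rmult_le_compat_r; [left; apply Rinv_0_lt_compat; auto|auto]. }
    assert (He1 : 0 <= exp 1 - 1) by (pose proof (exp_ineq1_le 1); lra).
    assert (1 <= Y2 1 c cl is * exp (- c2 n (T2 a n) k0)).
    { unfold Y2, c2. apply exp_ge_1. rewrite HL. nra. }
    assert (0 <= Y1 a 2 c cl is * exp (- c1 a n m2 k1)) by apply Hpos.
    unfold G2f. lra.
Qed.


Lemma E_rsum {A} (m : dist A) (g : A -> nat -> R) n :
  E m (fun x => rsum (g x) n) = rsum (fun c => E m (fun x => g x c)) n.
Proof.
  induction n; simpl.
  - rewrite E_const. lra.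
  - rewrite E_plus. rewrite IHn. reflexivity.
Qed.

Lemma exp_eq1 x : x = 0 -> exp x = 1.
Proof. intros; subst; apply exp_0. Qed.

Lemma E_scalr {A} (m : dist A) f c : E m (fun x => f x * c) = E m f * c.
Proof. rewrite Rmult_comm, <- E_scal. apply E_ext. intros; ring. Qed.

Lemma prob_bound a d n m2 k0 k1 lu ll : 1 < a -> (1 <= d)%nat -> (2 <= n)%nat ->
  (2 <= m2 <= n)%nat -> INR m2 <= T2 a n < INR m2 + 1 -> 0 < k0 -> 0 < lu -> 0 < ll ->
  1 - (exp (- cU a n k1 lu) + exp (- cL a m2 k0 ll) +
       INR n * (exp (- c2 n (T2 a n) k0) + exp (- c1 a n m2 k1)))
  <= prob (SModel n a d) (good a n).
Proof.
  intros Ha Hd Hn Hm2 Ht Hk0 Hlu Hll.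
  unfold SModel. set (k := (n - 2)%nat).
  assert (Ha0 : 0 < a) by lra.
  destruct (gen_props a d k Ha0 Hd) as [Hnn [Hmass Hsupp]].
  rewrite prob_E.
  assert (Hind : E (gen a d k) (fun x => if good a n x then 1 else 0) +
     E (gen a d k) (fun x => if good a n x then 0 else 1) = 1).
  { rewrite <- E_plus. rewrite (E_ext _ _ (fun _ => 1)). exact Hmass. intros x _. destruct (good a n x); lra. }
  assert (HF : E (gen a d k) (fun x => if good a n x then 0 else 1) <=
               E (gen a d k) (fun x => Fs a n m2 (T2 a n) k0 k1 lu ll (col x) (isseed x))).
  { apply E_le; auto. intros x Hx. destruct (Hsupp x Hx) as [HI HL].
    apply pointwise; auto. unfold k in HL; lia. }
  assert (HE : E (gen a d k) (fun x => Fs a n m2 (T2 a n) k0 k1 lu ll (col x) (isseed x)) <=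
     exp (- cU a n k1 lu) + exp (- cL a m2 k0 ll) +
       INR n * (exp (- c2 n (T2 a n) k0) + exp (- c1 a n m2 k1))).
  { unfold Fs. rewrite !E_plus. rewrite E_rsum.
    rewrite <- rsum_const.
    assert (HU : E (gen a d k) (fun x => KU a lu (col x) (isseed x)) <= 1).
    { replace 1 with (KU a lu (col G2) (isseed G2)).
      apply supermart; auto. intros; apply KU_super; auto; lra.
      unfold KU, pterm; simpl. apply exp_eq1. ring. }
    assert (HL : E (gen a d k) (fun x => KL a ll m2 (col x) (isseed x)) <= 1).
    { replace 1 with (KL a ll m2 (col G2) (isseed G2)).
      apply supermart; auto. intros; apply KL_super; auto.
      unfold KL. change (length (col G2)) with 2%nat. rewrite Nat.min_l by lia. unfold pterm; simpl. apply exp_eq1. ring. }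
    assert (H2 : forall c, E (gen a d k) (fun x => Y2 1 c (col x) (isseed x)) <= 1).
    { intros c. eapply Rle_trans. apply (supermart a d k (Y2 1 c)); auto. intros; apply Y2_super; auto; lra.
      right. unfold Y2, Sp, rate; simpl. apply exp_eq1. ring. }
    assert (H1 : forall c, E (gen a d k) (fun x => Y1 a 2 c (col x) (isseed x)) <= 1).
    { intros c. eapply Rle_trans. apply (supermart a d k (Y1 a 2 c)); auto. intros; apply Y1_super; auto.
      right. unfold Y1, Sp, rateT; simpl. apply exp_eq1. ring. }
    assert (Hp : forall x, 0 < exp x) by apply exp_pos.
    apply Rplus_le_compat.
    - rewrite !E_scalr. pose proof (Hp (- cU a n k1 lu)). pose proof (Hp (- cL a m2 k0 ll)). nra.
    - apply rsum_le. intros c _. rewrite E_plus, !E_scalr.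
      pose proof (Hp (- c2 n (T2 a n) k0)). pose proof (Hp (- c1 a n m2 k1)). specialize (H1 c). specialize (H2 c). nra. }
  lra.
Qed.


Lemma exp_le_inv x : x < 1 -> exp x <= / (1 - x).
Proof.
  intros H. pose proof (exp_ineq1_le (- x)). pose proof (exp_pos x).
  assert (exp x * exp (- x) = 1) by (rewrite <- exp_plus; replace (x + - x) with 0 by ring; apply exp_0).
  apply (Rmult_le_reg_r (1 - x)); [lra|]. rewrite Rinv_l by lra. nra.
Qed.

Lemma exp_neg_le x : 0 < x -> exp (- x) <= / x.
Proof.
  intros H. pose proof (exp_ineq1_le x). pose proof (exp_pos (- x)).
  assert (exp x * exp (- x) = 1) by (rewrite <- exp_plus; replace (x + - x) with 0 by ring; apply exp_0).
  apply (Rmult_le_reg_r x); [lra|]. rewrite Rinv_l by lra. nra.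
Qed.

Lemma ln_le_sub1 z : 0 < z -> ln z <= z - 1.
Proof.
  intros H. pose proof (exp_ineq1_le (z - 1)). rewrite <- (ln_exp (z - 1)).
  destruct (Req_dec z (exp (z - 1))). rewrite <- H1; lra.
  left; apply ln_increasing; lra.
Qed.

Lemma ln_le_sqrt y : 0 < y -> ln y <= 2 * sqrt y.
Proof.
  intros H. assert (Hs : 0 < sqrt y) by (apply sqrt_lt_R0; auto).
  replace y with (sqrt y * sqrt y) at 1 by (apply sqrt_sqrt; lra).
  rewrite ln_mult by auto. pose proof (ln_le_sub1 (sqrt y) Hs). lra.
Qed.

Lemma ln_mono x y : 0 < x -> x <= y -> ln x <= ln y.
Proof. intros. destruct (Req_dec x y). subst; lra. left; apply ln_increasing; lra. Qed.

Lemma Rpower_exp x y : Rpower x y = exp (y * ln x).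
Proof. reflexivity. Qed.

Lemma p_new_le_inv a i : 1 <= a -> (3 <= i)%nat -> p_new a i <= / ln (INR i).
Proof.
  intros Ha Hi. assert (H1 : 1 <= ln (INR i)) by (apply ln_ge1, INR3; auto).
  unfold p_new, Rpower. rewrite <- (exp_ln (/ ln (INR i))) by (apply Rinv_0_lt_compat; lra).
  apply exp_mono. rewrite ln_Rinv by lra.
  assert (0 <= ln (ln (INR i))) by (rewrite <- ln_1; apply ln_mono; lra). nra.
Qed.

Lemma count_lt_le M n : 0 <= M ->
  rsum (fun v => if Rlt_dec (INR (S v)) M then 1 else 0) n <= M.
Proof.
  intros HM.
  assert (Hn : forall n, rsum (fun v => if Rlt_dec (INR (S v)) M then 1 else 0) n <= INR n).
  { induction n0; [simpl; lra|]. rewrite rsum_S, S_INR. destruct (Rlt_dec _ _); lra. }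
  induction n; [simpl; lra|]. rewrite rsum_S. destruct (Rlt_dec (INR (S n)) M).
  - specialize (Hn n). rewrite S_INR in r. lra.
  - lra.
Qed.

Lemma Rpower_le_base_neg x y a : 0 < x <= y -> 0 <= a -> Rpower y (- a) <= Rpower x (- a).
Proof.
  intros Hxy Ha. rewrite !Rpower_exp. apply exp_mono.
  assert (ln x <= ln y) by (apply ln_mono; lra). nra.
Qed.

Lemma Psum_upper a n : 1 < a -> (3 <= n)%nat ->
  rsum (pterm a) n <= exp ((1 - / (3 * a + 1)) * ln (INR n)) + 3 / 2 * (INR n * Rpower (ln (INR n)) (- a)).
Proof.
  intros Ha Hn. set (L := ln (INR n)). set (th := 1 - / (3 * a + 1)). set (M := exp (th * L)).
  assert (HL : 1 <= L) by (apply ln_ge1, INR3; auto).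
  assert (Hth : 0 < th < 1).
  { unfold th. assert (0 < / (3 * a + 1) < 1). split. apply Rinv_0_lt_compat; lra.
    rewrite <- Rinv_1. apply Rinv_lt_contravar; lra. lra. }
  assert (HRL : 0 < Rpower L (- a)) by apply exp_pos.
  eapply Rle_trans with (rsum (fun v => (if Rlt_dec (INR (S v)) M then 1 else 0) + 3 / 2 * Rpower L (- a)) n).
  - apply rsum_le. intros v Hv. unfold pterm. destruct ((2 <=? v)%nat) eqn:E2.
    2:{ destruct (Rlt_dec _ _); lra. }
    apply Nat.leb_le in E2.
    assert (Hp := p_new_bounds a (S v) ltac:(lra) ltac:(lia)).
    destruct (Rlt_dec (INR (S v)) M) as [Hlt|Hge]; [lra|].
    assert (HSv : M <= INR (S v)) by lra.
    assert (HlnSv : th * L <= ln (INR (S v))).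
    { unfold M in HSv. rewrite <- (ln_exp (th * L)). apply ln_mono; auto. apply exp_pos. }
    assert (HthL : 0 < th * L) by nra.
    unfold p_new. eapply Rle_trans. apply (Rpower_le_base_neg (th * L)); [lra|lra].
    rewrite <- Rpower_mult_distr by lra.
    assert (Hthp : Rpower th (- a) <= 3 / 2).
    { rewrite Rpower_exp.
      assert (Hln : - ln th <= / (3 * a)).
      { unfold th. replace (1 - / (3 * a + 1)) with (/ (1 + / (3 * a))) by (field; lra).
        rewrite ln_Rinv by (assert (0 < / (3 * a)) by (apply Rinv_0_lt_compat; lra); lra).
        assert (0 < / (3 * a)) by (apply Rinv_0_lt_compat; lra).
        pose proof (ln_le_sub1 (1 + / (3 * a)) ltac:(lra)). lra. }
      eapply Rle_trans. apply exp_mono with (y := / 3).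
      { replace (- a * ln th) with (a * (- ln th)) by ring.
        apply Rle_trans with (a * / (3 * a)). apply Rmult_le_compat_l; lra. right; field; lra. }
      eapply Rle_trans. apply exp_le_inv. lra. right; field. }
    nra.
  - rewrite rsum_plus, rsum_const. pose proof (count_lt_le M n ltac:(left; apply exp_pos)).
    fold L. lra.
Qed.

Lemma Psum_lower a n m2 : 0 < a -> (3 <= n)%nat -> (2 <= m2 <= n)%nat ->
  INR (m2 - 2) * Rpower (ln (INR n)) (- a) <= rsum (pterm a) m2.
Proof.
  intros Ha Hn Hm. apply rsum_lower.
  - intros v Hv. unfold pterm. destruct (2 <=? v)%nat eqn:E2; [|lra].
    apply Nat.leb_le in E2. apply p_new_bounds; auto; lia.
  - intros v Hv. unfold pterm. replace ((2 <=? v)%nat) with true by (symmetry; apply Nat.leb_le; lia).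
    fold (p_new a n). apply p_new_mono; auto; lia.
Qed.

Definition m2of (a : R) (n : nat) : nat := (Z.to_nat (up (T2 a n)) - 1)%nat.

Lemma m2of_spec a n : 0 <= T2 a n -> INR (m2of a n) <= T2 a n < INR (m2of a n) + 1.
Proof.
  intros H. unfold m2of. destruct (archimed (T2 a n)) as [H1 H2].
  assert (Hz : (1 <= up (T2 a n))%Z).
  { apply le_IZR. assert (IZR (up (T2 a n)) > 0) by lra.
    apply lt_IZR in H0. apply IZR_le. lia. }
  rewrite minus_INR. rewrite INR_IZR_INZ. rewrite Z2Nat.id by lia. simpl. lra.
  apply (Nat.le_trans _ (Z.to_nat 1)). simpl; lia. apply Z2Nat.inj_le; lia.
Qed.

Lemma Rpower_shift L a : 1 <= L -> Rpower L (a - 1) * Rpower L (- a) * L = 1.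
Proof.
  intros HL. rewrite <- Rpower_plus. replace (a - 1 + - a) with (- (1)) by ring.
  rewrite Rpower_Ropp, Rpower_1 by lra. field. lra.
Qed.

Lemma exp_neg_le2 x : 0 <= x -> exp (- x) <= / (1 + x).
Proof.
  intros H. pose proof (exp_ineq1_le x). pose proof (exp_pos (- x)).
  assert (exp x * exp (- x) = 1) by (rewrite <- exp_plus; replace (x + - x) with 0 by ring; apply exp_0).
  apply (Rmult_le_reg_r (1 + x)); [lra|]. rewrite Rinv_l by lra. nra.
Qed.

Lemma inv_bound c X eps : 0 < c -> 0 < eps -> c / eps <= X -> / X <= eps / c.
Proof.
  intros Hc He H. assert (0 < c / eps) by (unfold Rdiv; apply Rmult_lt_0_compat; [lra|apply Rinv_0_lt_compat; lra]).
  replace (eps / c) with (/ (c / eps)) by (field; lra). apply Rinv_le_contravar; auto.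
Qed.

Section Num.
Variables (a eps : R) (n : nat).
Hypotheses (Ha : 1 < a) (Heps : 0 < eps) (Hn : (60 <= n)%nat).
Let L := ln (INR n).
Hypotheses (HL11 : 11 <= L) (HRp : 200 <= Rpower L (a - 1))
  (HM : a * ln L + ln 10 <= L / (3 * a + 1)) (Hhalf : a * ln L <= L / 2) (HLe : 2000 / eps <= L).
Let X := INR n * Rpower L (- a).
Let m2 := m2of a n.

Lemma num_INRn : INR n = exp L.
Proof. unfold L. rewrite exp_ln; auto. apply lt_0_INR; lia. Qed.

Lemma num_X : X = exp (L - a * ln L).
Proof. unfold X. rewrite num_INRn, Rpower_exp, <- exp_plus. f_equal. ring. Qed.

Lemma num_Xpos : 0 < X.
Proof. rewrite num_X; apply exp_pos. Qed.

Lemma num_Xbig : L / 2 <= X.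
Proof. rewrite num_X. eapply Rle_trans; [|apply exp_mono with (x := L / 2); lra].
  pose proof (exp_ineq1_le (L / 2)). lra. Qed.

Lemma num_delta : 0 < delta1 a n <= / 20.
Proof.
  unfold delta1. fold L. split.
  - apply Rmult_lt_0_compat; [lra|]. apply Rinv_0_lt_compat; lra.
  - unfold Rdiv. apply (Rmult_le_reg_r (Rpower L (a - 1))); [lra|].
    rewrite Rmult_assoc, Rinv_l by lra. lra.
Qed.

Lemma num_T2 : 19 / 20 * INR n <= T2 a n <= INR n.
Proof. unfold T2. pose proof num_delta. pose proof (pos_INR n). split; nra. Qed.

Lemma num_m2 : INR m2 <= T2 a n < INR m2 + 1 /\ (2 <= m2 <= n)%nat /\ 19 / 20 * INR n - 1 <= INR m2.
Proof.
  pose proof num_T2. assert (HnR : 60 <= INR n) by (apply le_INR in Hn; simpl in Hn; lra).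
  assert (Hs := m2of_spec a n ltac:(lra)). fold m2 in Hs.
  split; auto. split; [|lra]. split.
  - assert (2 < INR m2 + 1) by lra. assert (INR 1 < INR m2) by (simpl; lra). apply INR_lt in H1. lia.
  - apply INR_le. lra.
Qed.

Lemma num_shift : delta1 a n * INR n = 10 * L * X.
Proof.
  unfold delta1, X. fold L. pose proof (Rpower_shift L a ltac:(lra)).
  assert (0 < Rpower L (a - 1)) by apply exp_pos.
  apply (Rmult_eq_reg_r (Rpower L (a - 1))); [|lra].
  transitivity (10 * INR n). field; lra.
  transitivity (10 * INR n * (Rpower L (a - 1) * Rpower L (- a) * L)). rewrite H; ring. ring.
Qed.

Lemma num_Pn : rsum (pterm a) n <= 16 / 10 * X.
Proof.
  eapply Rle_trans. apply Psum_upper; auto; lia. fold L. fold X.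
  assert (exp ((1 - / (3 * a + 1)) * L) <= / 10 * X).
  { rewrite num_X. replace (/ 10) with (exp (- ln 10)) by (rewrite exp_Ropp, exp_ln; lra).
    rewrite <- exp_plus. apply exp_mono.
    replace ((1 - / (3 * a + 1)) * L) with (L - L / (3 * a + 1)) by (field; lra). lra. }
  lra.
Qed.

Lemma num_Pm2 : 9 / 10 * X <= rsum (pterm a) m2.
Proof.
  destruct num_m2 as [_ [Hm Hm2]].
  eapply Rle_trans; [|apply (Psum_lower a n m2); [lra|lia|lia]]. fold L. fold X.
  rewrite minus_INR by lia. simpl (INR 2).
  assert (HnR : 60 <= INR n) by (apply le_INR in Hn; simpl in Hn; lra).
  assert (0 < Rpower L (- a)) by apply exp_pos. unfold X. nra.
Qed.

Lemma num_p : p_new a (S m2) <= / 10.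
Proof.
  destruct num_m2 as [_ [Hm Hm2]].
  assert (HnR : 60 <= INR n) by (apply le_INR in Hn; simpl in Hn; lra).
  eapply Rle_trans. apply p_new_le_inv; [lra|lia].
  apply Rinv_le_contravar; [lra|].
  assert (Hl2 : ln 2 <= 1) by (pose proof (ln_le_sub1 2); lra).
  assert (ln (INR n / 2) <= ln (INR (S m2))).
  { apply ln_mono; [lra|]. rewrite S_INR. lra. }
  unfold Rdiv in H. rewrite ln_mult in H by (try apply Rinv_0_lt_compat; lra).
  rewrite ln_Rinv in H by lra. fold L in H. lra.
Qed.

Lemma num_err :
  exp (- cU a n (2 * X) (/ 10)) + exp (- cL a m2 (3 / 4 * X) (/ 10)) +
  INR n * (exp (- c2 n (T2 a n) (3 / 4 * X)) + exp (- c1 a n m2 (2 * X))) <= eps.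
Proof.
  pose proof num_Xpos as HX. pose proof num_Xbig as HXb. pose proof num_Pn as HPn.
  pose proof num_Pm2 as HPm. pose proof num_p as Hp. pose proof num_shift as Hsh.
  destruct num_m2 as [Hms [Hm Hm2]]. fold m2 in Hms, Hm, Hm2, Hp, HPm.
  fold L in Hsh. fold X in Hsh.
  assert (HX1000 : 1000 / eps <= X) by lra.
  assert (HXe : 0 < eps * X) by nra.
  assert (HLpos : 0 < L) by lra.
  assert (HU : exp (- cU a n (2 * X) (/ 10)) <= 57 / 1000 * eps).
  { assert (He : exp (/ 10) <= 10 / 9) by (eapply Rle_trans; [apply exp_le_inv; lra|right; field]).
    assert (HP0 : 0 <= rsum (pterm a) n).
    { apply rsum_nonneg. intros k _. unfold pterm. destruct (2 <=? k)%nat eqn:E2; [|lra].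
      apply Nat.leb_le in E2. apply p_new_bounds; [lra|lia]. }
    assert (HcU : X / 45 - / 5 <= cU a n (2 * X) (/ 10)).
    { unfold cU. assert (0 <= exp (/ 10) - 1) by (pose proof (exp_ineq1_le (/ 10)); lra). nra. }
    apply Rle_trans with (exp (/ 5) * exp (- (X / 45))).
    { rewrite <- exp_plus. apply exp_mono. lra. }
    assert (exp (/ 5) <= 5 / 4) by (eapply Rle_trans; [apply exp_le_inv; lra|right; field]).
    assert (exp (- (X / 45)) <= 45 / X) by (eapply Rle_trans; [apply exp_neg_le; lra|right; field; lra]).
    assert (45 / X <= 45 / 1000 * eps).
    { pose proof (inv_bound 1000 X eps ltac:(lra) ltac:(lra) HX1000). unfold Rdiv. nra. }
    pose proof (exp_pos (- (X / 45))). nra. }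
  assert (HinvX : / X <= eps / 1000) by (apply inv_bound; lra).
  assert (HinvL : / L <= eps / 2000) by (apply inv_bound; lra).
  assert (HLt : exp (- cL a m2 (3 / 4 * X) (/ 10)) <= 15 / 100 * eps).
  { assert (He : exp (- / 10) <= 10 / 11) by (eapply Rle_trans; [apply exp_neg_le2; lra|right; field]).
    assert (HcL : X / 150 <= cL a m2 (3 / 4 * X) (/ 10)).
    { unfold cL. assert (0 <= (1 - exp (- / 10)) - / 11) by lra. nra. }
    apply Rle_trans with (exp (- (X / 150))). apply exp_mono; lra.
    eapply Rle_trans. apply exp_neg_le. lra. replace (/ (X / 150)) with (150 * / X) by (field; lra). lra. }
  assert (HnT : INR n - T2 a n = 10 * L * X) by (rewrite <- Hsh; unfold T2; ring).
  assert (H2t : INR n * exp (- c2 n (T2 a n) (3 / 4 * X)) <= eps / 100).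
  { assert (Hc2 : 10 / 3 * L - 1 <= c2 n (T2 a n) (3 / 4 * X)).
    { unfold c2. rewrite HnT. replace (10 * L * X / (3 / 4 * X)) with (40 / 3 * L) by (field; lra).
      pose proof exp_le_3. pose proof (exp_ineq1_le 1). fold L. nra. }
    rewrite num_INRn. fold L. rewrite <- exp_plus.
    apply Rle_trans with (exp 1 * exp (- (7 / 3 * L))).
    { rewrite <- exp_plus. apply exp_mono. lra. }
    assert (exp (- (7 / 3 * L)) <= 3 / 7 * / L) by (eapply Rle_trans; [apply exp_neg_le; lra|right; field; lra]).
    pose proof exp_le_3. pose proof (exp_pos (- (7 / 3 * L))). pose proof (exp_pos 1). nra. }
  assert (H1t : INR n * exp (- c1 a n m2 (2 * X)) <= eps / 100).
  { assert (He2 : exp (- (2)) <= / 4).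
    { replace (- (2)) with (- (1) + - (1)) by ring. rewrite exp_plus.
      assert (exp (- (1)) <= / 2) by (eapply Rle_trans; [apply exp_neg_le2; lra|right; field]).
      pose proof (exp_pos (- (1))). nra. }
    assert (Hnm : 10 * L * X <= INR (n - m2)) by (rewrite minus_INR by lia; lra).
    assert (Hq : 9 / 2 * L <= INR (n - m2) * ((1 - p_new a (S m2)) / (2 * X))).
    { apply Rle_trans with (10 * L * X * ((9 / 10) / (2 * X))).
      right; field; lra.
      apply Rmult_le_compat; [nra| |auto|].
      unfold Rdiv; apply Rmult_le_pos; [lra|left; apply Rinv_0_lt_compat; lra].
      unfold Rdiv; apply Rmult_le_compat_r; [left; apply Rinv_0_lt_compat; lra|lra]. }
    assert (Hc1 : 11 / 8 * L <= c1 a n m2 (2 * X)).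
    { unfold c1. fold L. replace (exp (-2)) with (exp (- (2))) by (f_equal; ring). nra. }
    rewrite num_INRn. fold L. rewrite <- exp_plus.
    apply Rle_trans with (exp (- (3 / 8 * L))). apply exp_mono; lra.
    eapply Rle_trans. apply exp_neg_le. lra. replace (/ (3 / 8 * L)) with (8 / 3 * / L) by (field; lra). lra. }
  lra.
Qed.
End Num.


Lemma conds a eps L : 1 < a -> 0 < eps ->
  Rmax (Rmax 11 (exp (200 / (a - 1)))) (Rmax (Rmax ((4 * a * (3 * a + 1)) ^ 2) (20 * (3 * a + 1))) (2000 / eps)) <= L ->
  11 <= L /\ 200 <= Rpower L (a - 1) /\ a * ln L + ln 10 <= L / (3 * a + 1) /\ a * ln L <= L / 2 /\ 2000 / eps <= L.
Proof.
  intros Ha He H.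
  pose proof (Rmax_l 11 (exp (200 / (a - 1)))). pose proof (Rmax_r 11 (exp (200 / (a - 1)))).
  pose proof (Rmax_l ((4 * a * (3 * a + 1)) ^ 2) (20 * (3 * a + 1))).
  pose proof (Rmax_r ((4 * a * (3 * a + 1)) ^ 2) (20 * (3 * a + 1))).
  pose proof (Rmax_l (Rmax 11 (exp (200 / (a - 1)))) (Rmax (Rmax ((4 * a * (3 * a + 1)) ^ 2) (20 * (3 * a + 1))) (2000 / eps))).
  pose proof (Rmax_r (Rmax 11 (exp (200 / (a - 1)))) (Rmax (Rmax ((4 * a * (3 * a + 1)) ^ 2) (20 * (3 * a + 1))) (2000 / eps))).
  pose proof (Rmax_l (Rmax ((4 * a * (3 * a + 1)) ^ 2) (20 * (3 * a + 1))) (2000 / eps)).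
  pose proof (Rmax_r (Rmax ((4 * a * (3 * a + 1)) ^ 2) (20 * (3 * a + 1))) (2000 / eps)).
  assert (HL11 : 11 <= L) by lra.
  assert (HLe : exp (200 / (a - 1)) <= L) by lra.
  assert (HK : (4 * a * (3 * a + 1)) ^ 2 <= L) by lra.
  assert (H20 : 20 * (3 * a + 1) <= L) by lra.
  assert (Heps : 2000 / eps <= L) by lra.
  assert (HlnL : 200 / (a - 1) <= ln L).
  { rewrite <- (ln_exp (200 / (a - 1))). apply ln_mono; auto. apply exp_pos. }
  assert (HRp : 200 <= Rpower L (a - 1)).
  { rewrite Rpower_exp. pose proof (exp_ineq1_le ((a - 1) * ln L)).
    assert (200 <= (a - 1) * ln L).
    { apply Rle_trans with ((a - 1) * (200 / (a - 1))). right; field; lra.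
      apply Rmult_le_compat_l; lra. }
    lra. }
  assert (Hsq : 4 * a * (3 * a + 1) <= sqrt L).
  { rewrite <- (sqrt_pow2 (4 * a * (3 * a + 1))) by nra. apply sqrt_le_1_alt. lra. }
  assert (HsqL : sqrt L * sqrt L = L) by (apply sqrt_sqrt; lra).
  assert (Hln : ln L <= 2 * sqrt L) by (apply ln_le_sqrt; lra).
  assert (Hs0 : 0 <= sqrt L) by apply sqrt_pos.
  assert (Ha1 : a * ln L <= L / (2 * (3 * a + 1))).
  { apply Rle_trans with (a * (2 * sqrt L)). apply Rmult_le_compat_l; lra.
    apply (Rmult_le_reg_r (2 * (3 * a + 1))); [lra|].
    replace (L / (2 * (3 * a + 1)) * (2 * (3 * a + 1))) with L by (field; lra).
    assert (0 <= (sqrt L - 4 * a * (3 * a + 1)) * sqrt L) by (apply Rmult_le_pos; lra). nra. }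
  assert (Hl10 : ln 10 <= 9) by (pose proof (ln_le_sub1 10); lra).
  assert (H10 : 9 <= L / (2 * (3 * a + 1))).
  { apply (Rmult_le_reg_r (2 * (3 * a + 1))); [lra|].
    replace (L / (2 * (3 * a + 1)) * (2 * (3 * a + 1))) with L by (field; lra). lra. }
  assert (Hdiv : L / (2 * (3 * a + 1)) + L / (2 * (3 * a + 1)) = L / (3 * a + 1)) by (field; lra).
  assert (HL0 : 0 <= L / (2 * (3 * a + 1))) by (apply Rmult_le_pos; [lra|left; apply Rinv_0_lt_compat; lra]).
  assert (Hle2 : L / (2 * (3 * a + 1)) <= L / 2).
  { unfold Rdiv. apply Rmult_le_compat_l; [lra|]. apply Rinv_le_contravar; lra. }
  repeat split; lra.
Qed.

Theorem lemma4 (a : R) (d : nat) :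
  1 < a -> (4 <= d)%nat ->
  forall eps : R, 0 < eps ->
  exists N : nat, forall n : nat, (N <= n)%nat ->
    1 - eps <= prob (SModel n a d) (good a n).
Proof.
  intros Ha Hd eps Heps.
  set (L0 := Rmax (Rmax 11 (exp (200 / (a - 1)))) (Rmax (Rmax ((4 * a * (3 * a + 1)) ^ 2) (20 * (3 * a + 1))) (2000 / eps))).
  exists (Nat.max 60 (Z.to_nat (up (exp L0)))).
  intros n Hn.
  assert (Hn60 : (60 <= n)%nat) by lia.
  assert (HnR : exp L0 <= INR n).
  { destruct (archimed (exp L0)) as [H1 H2].
    assert (Hup : (0 <= up (exp L0))%Z) by (apply le_IZR; pose proof (exp_pos L0); lra).
    apply Rle_trans with (INR (Z.to_nat (up (exp L0)))).
    - rewrite INR_IZR_INZ, Z2Nat.id by lia. lra.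
    - apply le_INR. lia. }
  assert (HL : L0 <= ln (INR n)).
  { rewrite <- (ln_exp L0). apply ln_mono; auto. apply exp_pos. }
  destruct (conds a eps (ln (INR n)) Ha Heps HL) as [H1 [H2 [H3 [H4 H5]]]].
  destruct (num_m2 a n Hn60 H2) as [Hs [Hm _]].
  set (X := INR n * Rpower (ln (INR n)) (- a)).
  assert (HX : 0 < X).
  { unfold X. apply Rmult_lt_0_compat. apply lt_0_INR; lia. apply exp_pos. }
  pose proof (num_err a eps n Ha Heps Hn60 H1 H2 H3 H4 H5) as Herr. fold X in Herr.
  pose proof (prob_bound a d n (m2of a n) (3 / 4 * X) (2 * X) (/ 10) (/ 10) Ha ltac:(lia) ltac:(lia) Hm Hs
      ltac:(lra) ltac:(lra) ltac:(lra)).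
  lra.
Qed.
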